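(* Let $m,n\ge2$ be integers and let $H$ be the graph on the vertex set $\{x_{i,j}: i\in[m], j\in[n]\}$ with edge set $\{\{x_{i,j},x_{i',j+1}\}: 1\le i<i'\le m,\ 1\le j\le n-1\}$. Then $\operatorname{cochord}(H)\le n-1$.
   Context: A graph is co-chordal if its complement is chordal (every induced cycle has length 3). The co-chordal cover number $\operatorname{cochord}(G)$ is the minimum $k$ such that there are co-chordal subgraphs $G_1,\dots,G_k$ of $G$ with $E(G)=\bigcup_i E(G_i)$. *)

(* Defs.v *)
From mathcomp Require Import all_boot.
Set Implicit Arguments. Unset Strict Implicit. Unset Printing Implicit Defensive.

Definition simple_graph (T : finType) (e : rel T) : Prop :=
  (forall x y, e x y = e y x) /\ (forall x, ~~ e x x).

Definition compl_graph (T : finType) (e : rel T) : rel T :=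
  fun x y => (x != y) && ~~ e x y.

Definition induced_cycle (T : finType) (e : rel T) (k : nat) (v : 'I_k -> T) : Prop :=
  3 <= k /\ injective v /\
  forall i j : 'I_k, e (v i) (v j) = ((j == i.+1 %% k :> nat) || (i == j.+1 %% k :> nat)).

Definition chordal (T : finType) (e : rel T) : Prop :=
  forall (k : nat) (v : 'I_k -> T), induced_cycle e v -> k = 3.

Definition cochordal (T : finType) (e : rel T) : Prop := chordal (compl_graph e).

Definition cochord_le (T : finType) (e : rel T) (k : nat) : Prop :=
  exists G : 'I_k -> rel T,
    (forall t, simple_graph (G t)) /\
    (forall t x y, G t x y -> e x y) /\
    (forall t, cochordal (G t)) /\
    (forall x y, e x y -> exists t, G t x y).

(* The graph H of the statement on vertices x_{i,j} = (i,j), i in [m], j in [n]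
   (0-indexed): edges {x_{i,j}, x_{i',j+1}} with i < i'. *)
Definition Hgraph (m n : nat) : rel ('I_m * 'I_n) :=
  fun a b =>
    (((a.1 < b.1) && (b.2 == (a.2).+1 :> nat)) ||
     ((b.1 < a.1) && (a.2 == (b.2).+1 :> nat))).

(* Main.v *)
Require Import Defs.
From mathcomp Require Import all_boot.
From mathcomp Require Import zify.

Definition Gt (m n t : nat) : rel ('I_m * 'I_n) :=
  fun a b => Hgraph a b && (minn a.2 b.2 == t).

Arguments Gt {m n} t.

Section S.
Variables m n t : nat.
Implicit Types x y : 'I_m * 'I_n.
Lemma Gcase x y : Gt t x y ->
  (x.2 = t :> nat /\ y.2 = t.+1 :> nat /\ x.1 < y.1) \/ (y.2 = t :> nat /\ x.2 = t.+1 :> nat /\ y.1 < x.1).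
Proof. rewrite /Gt /Hgraph; lia. Qed.
Lemma NG x y : x.2 = t :> nat -> y.2 = t.+1 :> nat -> ~~ Gt t x y -> y.1 <= x.1.
Proof. rewrite /Gt /Hgraph; lia. Qed.
Lemma NGs x y : ~~ Gt t x y -> ~~ Gt t y x.
Proof. rewrite /Gt /Hgraph minnC; lia. Qed.
Lemma Gside x y : Gt t x y -> (x.2 == t :> nat) = ~~ (y.2 == t :> nat).
Proof. rewrite /Gt /Hgraph; lia. Qed.
Lemma NG2 x y : ~~ Gt t x y -> (x.2 = t :> nat -> y.2 = t.+1 :> nat -> y.1 <= x.1) /\ (y.2 = t :> nat -> x.2 = t.+1 :> nat -> x.1 <= y.1).
Proof. move=> h; split=> h1 h2; [exact: NG _ _ h1 h2 h | exact: NG _ _ h1 h2 (NGs _ _ h)]. Qed.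
Lemma chain (a b c d : 'I_m * 'I_n) : Gt t a c -> Gt t b d -> ~~ Gt t a b -> ~~ Gt t b c -> ~~ Gt t c d -> ~~ Gt t a d -> False.
Proof.
move=> /Gcase[[? [? ?]]|[? [? ?]]] /Gcase[[? [? ?]]|[? [? ?]]] /NG2 [? ?] /NG2 [? ?] /NG2 [? ?] /NG2 [? ?]; lia.
Qed.
End S.

Lemma nonadj (i j k : nat) : i.+1 < j -> j < k -> (0 < i) || (j.+1 < k) ->
  ((j == i.+1 %% k) || (i == j.+1 %% k)) = false.
Proof.
move=> hij hjk h.
rewrite (@modn_small i.+1 k); last by lia.
have -> : (j == i.+1) = false by lia.
case: (ltngtP j.+1 k) => hk.
- rewrite modn_small //; lia.
- lia.
- rewrite hk modnn /=; lia.
Qed.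

Lemma adjS (i k : nat) : i.+1 < k -> ((i.+1 == i.+1 %% k) || (i == i.+2 %% k)) = true.
Proof. by move=> h; rewrite modn_small // eqxx. Qed.

Lemma Gt_chordal m n t : cochordal (@Gt m n t).
Proof.
move=> k v [k3 [inj adj]].
case: (ltngtP k 3) => // hk; first by lia.
have key : forall i j : 'I_k, i != j ->
    ((j == i.+1 %% k :> nat) || (i == j.+1 %% k :> nat)) = false -> Gt t (v i) (v j).
  move=> i j ij hc; move: (adj i j); rewrite hc /compl_graph.
  have -> : (v i != v j) by apply/eqP => /inj /eqP; rewrite (negbTE ij).
  by move=> /= /negbFE.
have key2 : forall i j : 'I_k,
    ((j == i.+1 %% k :> nat) || (i == j.+1 %% k :> nat)) = true -> ~~ Gt t (v i) (v j).
  move=> i j hc; move: (adj i j); rewrite hc /compl_graph.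
  by move=> /andP [].
have h0 : 0 < k by lia.
have h1 : 1 < k by lia.
have h2 : 2 < k by lia.
have h3 : 3 < k by lia.
pose o0 := Ordinal h0; pose o1 := Ordinal h1; pose o2 := Ordinal h2; pose o3 := Ordinal h3.
have G : forall (i j : nat) (hi : i < k) (hj : j < k), i.+1 < j -> (0 < i) || (j.+1 < k) ->
    Gt t (v (Ordinal hi)) (v (Ordinal hj)).
  move=> i j hi hj hij hh; apply: key; first by rewrite -val_eqE /=; lia.
  exact: nonadj.
have N : forall (i : nat) (hi : i < k) (hj : i.+1 < k), ~~ Gt t (v (Ordinal hi)) (v (Ordinal hj)).
  by move=> i hi hj; apply: key2; rewrite /= adjS.
have G02 := G 0 2 h0 h2 isT ltac:(lia).
have G13 := G 1 3 h1 h3 isT isT.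
case: (ltngtP k 4) => hk4; first by lia.
- have h4 : 4 < k by lia.
  have G03 := G 0 3 h0 h3 isT ltac:(lia).
  have G14 := G 1 4 h1 h4 isT isT.
  have G24 := G 2 4 h2 h4 isT isT.
  move: G02 G13 G03 G14 G24 => /Gside e02 /Gside e13 /Gside e03 /Gside e14 /Gside e24.
  move: e02 e13 e03 e14 e24.
  by case: (_ == _); case: (_ == _); case: (_ == _); case: (_ == _); case: (_ == _).
- have N01 := N 0 h0 h1.
  have N12 := N 1 h1 h2.
  have N23 := N 2 h2 h3.
  have N03 : ~~ Gt t (v (Ordinal h0)) (v (Ordinal h3)).
    apply: key2; subst k; by [].
  exfalso; exact: (@chain m n t _ _ _ _ G02 G13 N01 N12 N23 N03).
Qed.

Theorem lemma3p10 (m n : nat) : 2 <= m -> 2 <= n -> cochord_le (@Hgraph m n) n.-1.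
Proof.
move=> hm hn.
exists (fun t : 'I_n.-1 => @Gt m n t); split; [|split; [|split]].
- move=> t; split.
  + by move=> x y; rewrite /Gt /Hgraph minnC orbC.
  + move=> x; rewrite /Gt /Hgraph; lia.
- by move=> t x y /andP [].
- move=> t; exact: Gt_chordal.
- move=> x y hxy.
  have ht : minn x.2 y.2 < n.-1.
    case: x y hxy => [a b] [c d]; rewrite /Hgraph /=; have := ltn_ord b; have := ltn_ord d; lia.
  exists (Ordinal ht); rewrite /Gt hxy /=; by [].
Qed.
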